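(* (i) Let $Y\subseteq X$ be metric spaces (with the restricted metric) and $x\in Y$. Then $\underline{\delta}_Y(x)\le\underline{\delta}_X(x)$ and $\overline{\delta}_Y(x)\le\overline{\delta}_X(x)$, with equalities if there is $R_0>0$ such that $B_X(x,R_0)\subseteq Y$. (ii) Let $X_1,X_2\subseteq X$ and $x\in X_1\cap X_2$. Then $\underline{\delta}_{X_1\cup X_2}(x)\ge\max\{\underline{\delta}_{X_1}(x),\underline{\delta}_{X_2}(x)\}$ and $\overline{\delta}_{X_1\cup X_2}(x)=\max\{\overline{\delta}_{X_1}(x),\overline{\delta}_{X_2}(x)\}$. (iii) Let $X,Y$ be metric spaces, $x\in X$, $y\in Y$, and endow $X\times Y$ with the product metric. Then $\underline{\delta}_{X\times Y}((x,y))\ge\underline{\delta}_X(x)+\underline{\delta}_Y(y)$ and $\overline{\delta}_{X\times Y}((x,y))\le\overline{\delta}_X(x)+\overline{\delta}_Y(y)$.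
   Context: For a metric space $Z$ and $z\in Z$, with $B_Z(z,r)$ the open ball, $\overline{B}(z,r)$ the closed ball and $n(r,A)$ the minimum number of open balls of radius $r$ needed to cover $A$, the lower and upper tangential dimensions are $\underline{\delta}_Z(z)=\liminf_{\lambda\to0}\liminf_{r\to0}\frac{\log n(\lambda r,\overline{B}(z,r))}{\log1/\lambda}$, $\overline{\delta}_Z(z)=\limsup_{\lambda\to0}\limsup_{r\to0}\frac{\log n(\lambda r,\overline{B}(z,r))}{\log1/\lambda}$ (possibly infinite); for a subset $E$ of a metric space, $\underline{\delta}_E$, $\overline{\delta}_E$ are computed in $E$ with the restricted metric. *)

(* Defs.v *)
From HB Require Import structures.
From mathcomp Require Import all_boot all_order all_algebra.
From mathcomp Require Import all_classical all_reals all_analysis.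
Set Implicit Arguments. Unset Strict Implicit. Unset Printing Implicit Defensive.
Import Order.TTheory GRing.Theory Num.Theory.
Local Open Scope classical_set_scope.
Local Open Scope ring_scope.

Definition is_metric (R : realType) (T : Type) (d : T -> T -> R) : Prop :=
  (forall x y, 0 <= d x y) /\
  (forall x y, d x y = 0 <-> x = y) /\
  (forall x y, d x y = d y x) /\
  (forall x y z, d x z <= d x y + d y z).

(* n(r, A) computed in the subspace E (restricted metric): the least number
   of open balls of E (centres in E) of radius r covering A; +oo if none. *)
Definition covnum (R : realType) (T : Type) (d : T -> T -> R) (E : set T)
    (r : R) (A : set T) : \bar R :=
  ereal_inf [set ((n%:R : R)%:E) | n in
    [set n : nat | exists c : 'I_n -> T, (forall i, E (c i)) /\
        (forall y, A y -> exists i, E y /\ d (c i) y < r)]].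

Definition cball (R : realType) (T : Type) (d : T -> T -> R) (E : set T)
    (z : T) (r : R) : set T := [set y | E y /\ d z y <= r].

(* log n(lam r, cl B_E(z,r)) / log (1/lam), with log(+oo) = +oo *)
Definition tdratio (R : realType) (T : Type) (d : T -> T -> R) (E : set T)
    (z : T) (lam r : R) : \bar R :=
  let N := covnum d E (lam * r) (cball d E z r) in
  if N == +oo%E then +oo%E else ((ln (fine N) / ln (lam^-1))%:E).

Definition liminf0 (R : realType) (f : R -> \bar R) : \bar R :=
  ereal_sup [set ereal_inf [set f t | t in [set t | 0 < t < e]] | e in [set e | 0 < e]].
Definition limsup0 (R : realType) (f : R -> \bar R) : \bar R :=
  ereal_inf [set ereal_sup [set f t | t in [set t | 0 < t < e]] | e in [set e | 0 < e]].

Definition lower_td (R : realType) (T : Type) (d : T -> T -> R) (E : set T)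
    (z : T) : \bar R :=
  liminf0 (fun lam => liminf0 (fun r => tdratio d E z lam r)).
Definition upper_td (R : realType) (T : Type) (d : T -> T -> R) (E : set T)
    (z : T) : \bar R :=
  limsup0 (fun lam => limsup0 (fun r => tdratio d E z lam r)).

Definition dprod (R : realType) (T1 T2 : Type) (d1 : T1 -> T1 -> R)
    (d2 : T2 -> T2 -> R) (p q : T1 * T2) : R :=
  Num.max (d1 p.1 q.1) (d2 p.2 q.2).

(* Main.v *)
Require Import Defs.
From HB Require Import structures.
From mathcomp Require Import all_boot all_order all_algebra.
From mathcomp Require Import all_classical all_reals all_analysis.
From mathcomp Require Import lra ring zify.
Import Order.TTheory GRing.Theory Num.Theory.
Local Open Scope classical_set_scope.
Local Open Scope ring_scope.

Section Abs.
Variable R : realType.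

Definition ratio (Nv : \bar R) (lam : R) : \bar R :=
  if Nv == +oo%E then +oo%E else ((ln (fine Nv) / ln (lam^-1))%:E).
Definition Lf (N : R -> R -> \bar R) : \bar R :=
  liminf0 (fun lam => liminf0 (fun r => ratio (N lam r) lam)).
Definition Uf (N : R -> R -> \bar R) : \bar R :=
  limsup0 (fun lam => limsup0 (fun r => ratio (N lam r) lam)).
Definition P (a lam : R) : R := expR (a * ln (lam^-1)).

Lemma lnV_gt0 (lam : R) : 0 < lam < 1 -> 0 < ln (lam^-1).
Proof. by case/andP=> l0 l1; apply: ln_gt0; rewrite invf_gt1. Qed.

Lemma ratio_le Nv lam a : 0 < lam < 1 -> (1 <= Nv)%E ->
  (ratio Nv lam <= a%:E)%E = (Nv <= (P a lam)%:E)%E.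
Proof.
move=> hl; case: Nv => [v| |] //= h1; rewrite /ratio /=.
rewrite !lee_fin in h1 *.
rewrite ler_pdivrMr ?lnV_gt0 //.
by rewrite -ler_expR lnK // posrE; apply: lt_le_trans h1.
Qed.

Lemma ratio_ge Nv lam a : 0 < lam < 1 -> (1 <= Nv)%E ->
  (a%:E <= ratio Nv lam)%E = ((P a lam)%:E <= Nv)%E.
Proof.
move=> hl; case: Nv => [v| |] //= h1; rewrite /ratio /=.
  rewrite !lee_fin in h1 *.
  rewrite ler_pdivlMr ?lnV_gt0 //.
  by rewrite -ler_expR lnK // posrE; apply: lt_le_trans h1.
by rewrite !leey.
Qed.


Lemma ereal_between (x y : \bar R) : (y < x)%E -> exists a : R, (y < a%:E)%E /\ (a%:E < x)%E.
Proof.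
case: x => [u| |]; case: y => [v| |] //=; rewrite ?lte_fin => h.
- by exists ((u + v) / 2); rewrite !lte_fin; split; lra.
- by exists (u - 1); rewrite !lte_fin ltNye; split => //; lra.
- by exists (v + 1); rewrite !lte_fin ltey; split => //; lra.
- by exists 0; rewrite ltey ltNye.
Qed.

Arguments ereal_between {x y}.

Lemma le_approx_ub (x y : \bar R) :
  (forall a : R, (y < a%:E)%E -> (x <= a%:E)%E) -> (x <= y)%E.
Proof.
move=> H; rewrite leNgt; apply/negP => /ereal_between [a [h1 h2]].
by have := H a h1; rewrite leNgt h2.
Qed.

Lemma le_approx_lb (x y : \bar R) :
  (forall a : R, (a%:E < x)%E -> (a%:E <= y)%E) -> (x <= y)%E.
Proof.
move=> H; rewrite leNgt; apply/negP => /ereal_between [a [h1 h2]].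
by have := H a h2; rewrite leNgt h1.
Qed.

Definition Npos (N : R -> R -> \bar R) :=
  forall lam r, 0 < lam -> 0 < r -> (1 <= N lam r)%E.
Definition UB (N : R -> R -> \bar R) (a : R) :=
  exists2 l0, 0 < l0 & forall lam, 0 < lam < l0 ->
    exists2 r0, 0 < r0 & forall r, 0 < r < r0 -> (N lam r <= (P a lam)%:E)%E.
Definition LB (N : R -> R -> \bar R) (a : R) :=
  exists2 l0, 0 < l0 & forall lam, 0 < lam < l0 ->
    exists2 r0, 0 < r0 & forall r, 0 < r < r0 -> ((P a lam)%:E <= N lam r)%E.

Lemma U_lt N a : Npos N -> (Uf N < a%:E)%E -> UB N a.
Proof.
move=> hN /ereal_inf_lt [_ [e /= e0 <-]] hlt.
exists (Num.min e 1); first by rewrite lt_min e0 ltr01.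
move=> lam /andP[l0]; rewrite lt_min => /andP[le l1].
have : (limsup0 (fun r => ratio (N lam r) lam) < a%:E)%E.
  apply: le_lt_trans hlt; apply: ereal_sup_ubound; exists lam => //=.
  by rewrite l0 le.
case/ereal_inf_lt => _ [e' /= e'0 <-] hlt'.
exists e' => // r /andP[r0 re].
rewrite -ratio_le ?l0 ?l1 ?hN //; apply/ltW; apply: le_lt_trans hlt'.
by apply: ereal_sup_ubound; exists r => //=; rewrite r0 re.
Qed.

Lemma UB_le N a : Npos N -> UB N a -> (Uf N <= a%:E)%E.
Proof.
move=> hN [l0 l00 H]; apply: ge_ereal_inf.
exists (ereal_sup [set limsup0 (fun r => ratio (N lam r) lam) | lam in
   [set t | 0 < t < Num.min l0 1]]).
  by exists (Num.min l0 1) => //=; rewrite lt_min l00 ltr01.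
apply/ereal_supP => _ [lam /= /andP[lp ll] <-]; move: ll; rewrite lt_min => /andP[ll l1].
have [r0 r00 Hr] := H lam ltac:(by rewrite lp ll).
apply: ge_ereal_inf.
exists (ereal_sup [set ratio (N lam r) lam | r in [set t | 0 < t < r0]]).
  by exists r0.
apply/ereal_supP => _ [r /= /andP[rp rr] <-].
by rewrite ratio_le ?lp ?l1 ?hN //; apply: Hr; rewrite rp rr.
Qed.

Lemma L_gt N a : Npos N -> (a%:E < Lf N)%E -> LB N a.
Proof.
move=> hN /ereal_sup_gt [_ [e /= e0 <-]] hlt.
exists (Num.min e 1); first by rewrite lt_min e0 ltr01.
move=> lam /andP[l0]; rewrite lt_min => /andP[le l1].
have : (a%:E < liminf0 (fun r => ratio (N lam r) lam))%E.
  apply: lt_le_trans hlt _; apply: ereal_inf_lbound; exists lam => //=.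
  by rewrite l0 le.
case/ereal_sup_gt => _ [e' /= e'0 <-] hlt'.
exists e' => // r /andP[r0 re].
rewrite -ratio_ge ?l0 ?l1 ?hN //; apply/ltW; apply: lt_le_trans hlt' _.
by apply: ereal_inf_lbound; exists r => //=; rewrite r0 re.
Qed.

Lemma LB_ge N a : Npos N -> LB N a -> (a%:E <= Lf N)%E.
Proof.
move=> hN [l0 l00 H]; apply: le_ereal_sup_tmp.
exists (ereal_inf [set liminf0 (fun r => ratio (N lam r) lam) | lam in
   [set t | 0 < t < Num.min l0 1]]).
  by exists (Num.min l0 1) => //=; rewrite lt_min l00 ltr01.
apply/ereal_infP => _ [lam /= /andP[lp ll] <-]; move: ll; rewrite lt_min => /andP[ll l1].
have [r0 r00 Hr] := H lam ltac:(by rewrite lp ll).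
apply: le_ereal_sup_tmp.
exists (ereal_inf [set ratio (N lam r) lam | r in [set t | 0 < t < r0]]).
  by exists r0.
apply/ereal_infP => _ [r /= /andP[rp rr] <-].
by rewrite ratio_ge ?lp ?l1 ?hN //; apply: Hr; rewrite rp rr.
Qed.

Lemma Lf_ge0 N : Npos N -> (0 <= Lf N)%E.
Proof.
move=> hN; apply: LB_ge => //; exists 1 => // lam /andP[l0 _].
exists 1 => // r /andP[r0 _]; rewrite /P mul0r expR0; exact: hN.
Qed.

Lemma Uf_ge0 N : Npos N -> (0 <= Uf N)%E.
Proof.
move=> hN; rewrite leNgt; apply/negP => /ereal_between [a [h1 h2]].
have [l0 l00 H] := U_lt _ _ hN h1.
have m0 : 0 < Num.min l0 1 by rewrite lt_min l00 ltr01.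
have hl : 0 < Num.min l0 1 / 2 < Num.min l0 1.
  move: m0; set m := Num.min l0 1 => m0; apply/andP; split; lra.
have hl1 : 0 < Num.min l0 1 / 2 < 1.
  by case/andP: hl => h3 h4; rewrite h3 /=; apply: lt_le_trans h4 _; rewrite ge_min lexx orbT.
have [r0 r00 Hr] := H (Num.min l0 1 / 2)
  ltac:(by case/andP: hl => h3 h4; rewrite h3 /=; apply: lt_le_trans h4 _; rewrite ge_min lexx).
have := Hr (r0 / 2) ltac:(apply/andP; split; lra).
have := hN (Num.min l0 1 / 2) (r0 / 2) ltac:(by case/andP: hl) ltac:(lra).
move=> h3 h4; have := le_trans h3 h4; rewrite lee_fin /P leNgt expR_lt1 => /negP h5.
rewrite lte_fin in h2.
have h6 := lnV_gt0 _ hl1.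
by apply: h5; rewrite pmulr_llt0 // -lte_fin.
Qed.


Lemma small_lam (K d : R) : 0 < d ->
  exists2 l1, 0 < l1 & forall lam, 0 < lam < l1 -> K <= d * ln (lam^-1).
Proof.
move=> d0; exists (expR (- (K / d))); first exact: expR_gt0.
move=> lam /andP[l0 l1].
rewrite -ler_pdivrMl // mulrC -ler_expR lnK ?posrE ?invr_gt0 //.
rewrite expRN in l1; apply: ltW.
by rewrite -[expR _]invrK ltf_pV2 // posrE ?invr_gt0 ?expR_gt0.
Qed.

Lemma lnVM (k mu : R) : 0 < k -> 0 < mu -> ln ((k * mu)^-1) = ln (mu^-1) - ln k.
Proof.
move=> k0 m0; rewrite invfM mulrC lnM ?posrE ?invr_gt0 //.
have h : ln k^-1 + ln k = 0.
  by rewrite -lnM ?posrE ?invr_gt0 // mulVf ?gt_eqF // ln1.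
lra.
Qed.


Lemma mono_U N M (k r0 : R) : Npos N -> Npos M -> 1 <= k -> 0 < r0 ->
  (forall mu r, 0 < mu -> k * mu < 1 -> 0 < r < r0 -> (N (k * mu)%R r <= M mu r)%E) ->
  (Uf N <= Uf M)%E.
Proof.
move=> hN hM k1 r00 H.
have k0 : 0 < k by apply: lt_le_trans k1.
apply: le_approx_ub => a ha.
have [a' [h1 h2]] := ereal_between ha.
rewrite lte_fin in h2.
have [l0 l00 HM] := U_lt _ _ hM h1.
have [l1 l10 Hs] := small_lam (a' * ln k) (a - a') ltac:(lra).
apply: UB_le => //.
exists (Num.min 1 (Num.min (k * l0) l1)); first by rewrite !lt_min ltr01 mulr_gt0.
move=> lam /andP[lp]; rewrite !lt_min => /andP[lam1 /andP[lamk laml1]].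
set mu := lam / k.
have mu0 : 0 < mu by rewrite divr_gt0.
have e : k * mu = lam by rewrite /mu mulrC divfK ?gt_eqF.
have [r1 r10 Hr] := HM mu ltac:(by rewrite mu0 /= /mu ltr_pdivrMr // mulrC).
exists (Num.min r0 r1); first by rewrite lt_min r00 r10.
move=> r /andP[rp]; rewrite lt_min => /andP[rr0 rr1].
apply: (@le_trans _ _ (M mu r)).
  by rewrite -{1}e; apply: H => //; rewrite ?e ?rp ?rr0.
apply: le_trans (Hr r _) _; first by rewrite rp rr1.
have := Hs lam ltac:(by rewrite lp laml1).
rewrite lee_fin /P ler_expR -e lnVM //.
move: (ln mu^-1) (ln k) => Lm lk; nra.
Qed.

Lemma mono_L N M (k r0 : R) : Npos N -> Npos M -> 1 <= k -> 0 < r0 ->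
  (forall mu r, 0 < mu -> k * mu < 1 -> 0 < r < r0 -> (N (k * mu)%R r <= M mu r)%E) ->
  (Lf N <= Lf M)%E.
Proof.
move=> hN hM k1 r00 H.
have k0 : 0 < k by apply: lt_le_trans k1.
apply: le_approx_lb => a ha.
have [a' [h1 h2]] := ereal_between ha.
rewrite lte_fin in h1.
have [l0 l00 HN] := L_gt _ _ hN h2.
have [l1 l10 Hs] := small_lam (a' * ln k) (a' - a) ltac:(lra).
apply: LB_ge => //.
exists (Num.min (Num.min (k^-1) (l0 / k)) l1).
  by rewrite !lt_min invr_gt0 k0 divr_gt0.
move=> mu /andP[mp]; rewrite !lt_min => /andP[/andP[muk mul0] mul1].
have lp : 0 < k * mu by rewrite mulr_gt0.
have lk1 : k * mu < 1 by rewrite mulrC -ltr_pdivlMr // div1r.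
have [r1 r10 Hr] := HN (k * mu) ltac:(by rewrite lp /= mulrC -ltr_pdivlMr).
exists (Num.min r0 r1); first by rewrite lt_min r00 r10.
move=> r /andP[rp]; rewrite lt_min => /andP[rr0 rr1].
apply: le_trans (H mu r mp lk1 ltac:(by rewrite rp rr0)).
apply: le_trans (Hr r _); last by rewrite rp rr1.
have := Hs mu ltac:(by rewrite mp mul1).
rewrite lee_fin /P ler_expR lnVM //.
move: (ln mu^-1) (ln k) => Lm lk; nra.
Qed.


Lemma union_U N N1 N2 : Npos N -> Npos N1 -> Npos N2 ->
  (forall lam r b1 b2, 0 < lam < 1 -> 0 < r -> (N1 lam r <= b1%:E)%E ->
     (N2 lam r <= b2%:E)%E -> (N lam r <= (b1 + b2)%:E)%E) ->
  (Uf N <= maxe (Uf N1) (Uf N2))%E.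
Proof.
move=> hN hN1 hN2 H.
apply: le_approx_ub => a ha.
have [a' [h1 h2]] := ereal_between ha.
rewrite lte_fin in h2.
have h11 : (Uf N1 < a'%:E)%E by apply: le_lt_trans h1; rewrite le_max lexx.
have h12 : (Uf N2 < a'%:E)%E by apply: le_lt_trans h1; rewrite le_max lexx orbT.
have [l1 l10 H1] := U_lt _ _ hN1 h11.
have [l2 l20 H2] := U_lt _ _ hN2 h12.
have [l3 l30 Hs] := small_lam (ln 2) (a - a') ltac:(lra).
apply: UB_le => //.
exists (Num.min (Num.min 1 l1) (Num.min l2 l3)); first by rewrite !lt_min ltr01 l10 l20.
move=> lam /andP[lp]; rewrite !lt_min => /andP[/andP[lam1 laml1] /andP[laml2 laml3]].
have [r1 r10 Hr1] := H1 lam ltac:(by rewrite lp laml1).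
have [r2 r20 Hr2] := H2 lam ltac:(by rewrite lp laml2).
exists (Num.min r1 r2); first by rewrite lt_min r10 r20.
move=> r /andP[rp]; rewrite lt_min => /andP[rr1 rr2].
have hl : 0 < lam < 1 by rewrite lp lam1.
have hr1 : 0 < r < r1 by rewrite rp rr1.
have hr2 : 0 < r < r2 by rewrite rp rr2.
apply: le_trans (H lam r _ _ hl rp (Hr1 r hr1) (Hr2 r hr2)) _.
have := Hs lam ltac:(by rewrite lp laml3).
rewrite lee_fin /P => h.
have -> : expR (a' * ln lam^-1) + expR (a' * ln lam^-1) = expR (ln 2 + a' * ln lam^-1).
  by rewrite expRD lnK ?posrE // mulr_natl mulr2n.
by rewrite ler_expR; move: (ln lam^-1) (ln 2) h => L lt h; nra.
Qed.


Lemma prod_U N N1 N2 : Npos N -> Npos N1 -> Npos N2 ->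
  (forall lam r b1 b2, 0 < lam < 1 -> 0 < r -> (N1 lam r <= b1%:E)%E ->
     (N2 lam r <= b2%:E)%E -> (N lam r <= (b1 * b2)%:E)%E) ->
  (Uf N <= Uf N1 + Uf N2)%E.
Proof.
move=> hN hN1 hN2 H.
apply: le_approx_ub => a ha.
have [a1 [a2 [h1 [h2 h3]]]] : exists a1 a2 : R,
    (Uf N1 < a1%:E)%E /\ (Uf N2 < a2%:E)%E /\ a1 + a2 < a.
  move: ha (Uf_ge0 _ hN1) (Uf_ge0 _ hN2).
  case: (Uf N1) => [u1| |]; case: (Uf N2) => [u2| |] //=.
  rewrite !lte_fin => h _ _.
  exists (u1 + (a - u1 - u2) / 3), (u2 + (a - u1 - u2) / 3); rewrite !lte_fin.
  split; [lra | split; lra].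
have [l1 l10 H1] := U_lt _ _ hN1 h1.
have [l2 l20 H2] := U_lt _ _ hN2 h2.
apply: UB_le => //.
exists (Num.min (Num.min 1 l1) l2); first by rewrite !lt_min ltr01 l10 l20.
move=> lam /andP[lp]; rewrite !lt_min => /andP[/andP[lam1 laml1] laml2].
have [r1 r10 Hr1] := H1 lam ltac:(by rewrite lp laml1).
have [r2 r20 Hr2] := H2 lam ltac:(by rewrite lp laml2).
exists (Num.min r1 r2); first by rewrite lt_min r10 r20.
move=> r /andP[rp]; rewrite lt_min => /andP[rr1 rr2].
have hl : 0 < lam < 1 by rewrite lp lam1.
have hr1 : 0 < r < r1 by rewrite rp rr1.
have hr2 : 0 < r < r2 by rewrite rp rr2.
apply: le_trans (H lam r _ _ hl rp (Hr1 r hr1) (Hr2 r hr2)) _.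
have L0 := lnV_gt0 _ hl.
rewrite lee_fin /P -expRD ler_expR.
by move: (ln lam^-1) L0 => L L0; nra.
Qed.

Lemma prod_L N N1 N2 : Npos N -> Npos N1 -> Npos N2 ->
  (forall mu r b1 b2, 0 < mu -> 2 * mu < 1 -> 0 < r -> 0 <= b1 -> 0 <= b2 ->
     (b1%:E <= N1 (2 * mu)%R r)%E -> (b2%:E <= N2 (2 * mu)%R r)%E ->
     ((b1 * b2)%:E <= N mu r)%E) ->
  (Lf N1 + Lf N2 <= Lf N)%E.
Proof.
move=> hN hN1 hN2 H.
apply: le_approx_lb => a ha.
have [a1 [a2 [h1 [h2 h3]]]] : exists a1 a2 : R,
    (a1%:E < Lf N1)%E /\ (a2%:E < Lf N2)%E /\ a < a1 + a2.
  move: ha (Lf_ge0 _ hN1) (Lf_ge0 _ hN2).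
  case: (Lf N1) => [u1| |]; case: (Lf N2) => [u2| |] //=.
  - rewrite !lte_fin !lee_fin => h _ _.
    exists (u1 - (u1 + u2 - a) / 3), (u2 - (u1 + u2 - a) / 3); rewrite !lte_fin.
    split; [lra | split; lra].
  - rewrite !lee_fin => _ h _.
    exists (u1 - 1), (a - u1 + 2); rewrite !lte_fin ltry; split; [lra | split; lra].
  - rewrite !lee_fin => _ _ h.
    exists (a - u2 + 2), (u2 - 1); rewrite !lte_fin ltry; split; [lra | split; lra].
  - move=> _ _ _; exists a, 1; rewrite !ltry; split => //; split => //; lra.
have [l1 l10 H1] := L_gt _ _ hN1 h1.
have [l2 l20 H2] := L_gt _ _ hN2 h2.
have [l3 l30 Hs] := small_lam ((a1 + a2) * ln 2) (a1 + a2 - a) ltac:(lra).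
apply: LB_ge => //.
exists (Num.min (Num.min (1/2) (l1/2)) (Num.min (l2/2) l3)).
  have h12 : 0 < 1/2 :> R by lra.
  have hl1 : 0 < l1/2 by lra.
  have hl2 : 0 < l2/2 by lra.
  by rewrite !lt_min l30 h12 hl1 hl2.
move=> mu /andP[mp]; rewrite !lt_min => /andP[/andP[mu1 mul1] /andP[mul2 mul3]].
have hl : 0 < 2 * mu < 1 by apply/andP; split; lra.
have [r1 r10 Hr1] := H1 (2 * mu) ltac:(apply/andP; split; lra).
have [r2 r20 Hr2] := H2 (2 * mu) ltac:(apply/andP; split; lra).
exists (Num.min r1 r2); first by rewrite lt_min r10 r20.
move=> r /andP[rp]; rewrite lt_min => /andP[rr1 rr2].
have hr1 : 0 < r < r1 by rewrite rp rr1.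
have hr2 : 0 < r < r2 by rewrite rp rr2.
have h2mu : 2 * mu < 1 by lra.
apply: le_trans (H mu r _ _ mp h2mu rp (expR_ge0 _) (expR_ge0 _) (Hr1 r hr1) (Hr2 r hr2)).
have := Hs mu ltac:(by rewrite mp mul3).
rewrite lee_fin /P -expRD ler_expR lnVM //.
by move: (ln mu^-1) (ln 2) => L lt; nra.
Qed.

End Abs.
Arguments ratio {R}. Arguments Lf {R}. Arguments Uf {R}. Arguments P {R}.
Arguments Npos {R}. Arguments mono_U {R}. Arguments mono_L {R}.
Arguments union_U {R}. Arguments prod_U {R}. Arguments prod_L {R}.

Section Comb.
Variable R : realType.

Definition CovN (T : Type) (d : T -> T -> R) (E : set T) (r : R) (A : set T) (n : nat) :=
  exists f : nat -> T, (forall i, (i < n)%N -> E (f i)) /\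
    (forall y, A y -> exists2 i, (i < n)%N & E y /\ d (f i) y < r).
Arguments CovN {T}.

Lemma covnum_le T (d : T -> T -> R) E r A n :
  CovN d E r A n -> (covnum d E r A <= (n%:R)%:E)%E.
Proof.
move=> [f [hE hA]]; apply: ereal_inf_lbound; exists n => //.
exists (fun i : 'I_n => f i); split => [i|y Ay]; first exact: hE.
by have [i ilt hi] := hA y Ay; exists (Ordinal ilt).
Qed.

Arguments covnum_le {T d E r A n}.

Lemma covnum_lb T (d : T -> T -> R) (x0 : T) E r A (b : \bar R) :
  (forall n, CovN d E r A n -> (b <= (n%:R)%:E)%E) -> (b <= covnum d E r A)%E.
Proof.
move=> H; apply/ereal_infP => _ [n [c [hE hA]] <-]; apply: H.
exists (fun i => oapp c x0 (insub i : option 'I_n)); split.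
  by move=> i lt; rewrite (@insubT nat (fun k => (k < n)%N) 'I_n i lt) /=; apply: hE.
move=> y Ay; have [i hi] := hA y Ay; exists (val i); first exact: ltn_ord.
by rewrite valK.
Qed.

Arguments covnum_lb {T d} x0 {E r A b}.

Lemma covnum_att T (d : T -> T -> R) (x0 : T) E r A (b : R) :
  (covnum d E r A <= b%:E)%E -> exists n, CovN d E r A n /\ (n%:R <= b).
Proof.
move=> H.
have ex : exists n, `[< CovN d E r A n >].
  apply: contrapT => hno.
  have : (+oo <= covnum d E r A)%E.
    apply: (covnum_lb x0) => n hn; exfalso; apply: hno; exists n; exact/asboolP.
  by rewrite leye_eq => /eqP hc; move: H; rewrite hc.
case: (ex_minnP ex) => n0 /asboolP hn0 hmin.
exists n0; split => //; rewrite -lee_fin; apply: le_trans H.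
apply: (covnum_lb x0) => n hn; rewrite lee_fin ler_nat; apply: hmin; exact/asboolP.
Qed.

Arguments covnum_att {T d} x0 {E r A b}.

Lemma CovN_sub T (d : T -> T -> R) E r A A' n :
  A' `<=` A -> CovN d E r A n -> CovN d E r A' n.
Proof. by move=> sA [f [hE hA]]; exists f; split => // y /sA; apply: hA. Qed.

Arguments CovN_sub {T d E r A A' n}.


Lemma CovN_move T (d : T -> T -> R) (E1 E2 A : set T) (x0 : T) rho n :
  is_metric d -> E1 x0 -> A `<=` E1 ->
  CovN d E2 rho A n -> CovN d E1 (rho + rho) A n.
Proof.
move=> [d0 [dxy [dsym dtri]]] Ex0 AE1 [f [_ hA]].
pose g i := match pselect (exists y, A y /\ d (f i) y < rho) with
  | left h => sval (cid h) | right _ => x0 end.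
exists g; split.
  move=> i _; rewrite /g; case: pselect => [h|//].
  by case: (svalP (cid h)) => /AE1.
move=> y Ay; have [i ilt [_ hi]] := hA y Ay; exists i => //; split; first exact: AE1.
rewrite /g; case: pselect => [h|hn]; last by exfalso; apply: hn; exists y.
case: (svalP (cid h)) => _ h2.
apply: le_lt_trans (dtri _ (f i) _) _; rewrite dsym; exact: ltrD.
Qed.

Lemma CovN_union T (d : T -> T -> R) (X1 X2 A1 A2 : set T) rho n1 n2 :
  CovN d X1 rho A1 n1 -> CovN d X2 rho A2 n2 ->
  CovN d (X1 `|` X2) rho (A1 `|` A2) (n1 + n2).
Proof.
move=> [f1 [hE1 hA1]] [f2 [hE2 hA2]].
exists (fun i => if (i < n1)%N then f1 i else f2 (i - n1)%N); split.
  move=> i lt; case: ifP => h; first by left; apply: hE1.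
  by right; apply: hE2; move/negbT: h; rewrite -leqNgt => h; lia.
move=> y [Ay|Ay].
  have [i ilt [Ey hi]] := hA1 y Ay; exists i; first lia.
  by rewrite ilt; split => //; left.
have [i ilt [Ey hi]] := hA2 y Ay; exists (n1 + i)%N; first lia.
rewrite ifF; last lia.
by rewrite addKn; split => //; right.
Qed.

Lemma CovN_prod T1 T2 (d1 : T1 -> T1 -> R) (d2 : T2 -> T2 -> R) (A1 : set T1)
  (A2 : set T2) (A : set (T1 * T2)) rho n1 n2 :
  (forall p, A p -> A1 p.1 /\ A2 p.2) ->
  CovN d1 setT rho A1 n1 -> CovN d2 setT rho A2 n2 ->
  CovN (dprod d1 d2) setT rho A (n1 * n2).
Proof.
move=> hA [f1 [_ hA1]] [f2 [_ hA2]].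
exists (fun k => (f1 (k %/ n2)%N, f2 (k %% n2)%N)); split => // y /hA [y1 y2].
have [i ilt [_ hi]] := hA1 _ y1; have [j jlt [_ hj]] := hA2 _ y2.
exists (i * n2 + j)%N; first nia.
split => //; rewrite /dprod /= gt_max.
have n20 : (0 < n2)%N by lia.
rewrite divnMDl // modnMDl (divn_small jlt) (modn_small jlt) addn0.
by rewrite hi hj.
Qed.


Lemma sep_exists T (d : T -> T -> R) (E A : set T) (x0 : T) rho :
  is_metric d -> A `<=` E -> forall k,
  (forall j, (j < k)%N -> ~ CovN d E rho A j) ->
  exists s : nat -> T, (forall i, (i < k)%N -> A (s i)) /\
    (forall i j, (i < k)%N -> (j < k)%N -> i <> j -> rho <= d (s i) (s j)).
Proof.
move=> [d0 [dxy [dsym dtri]]] AE; elim=> [|k IH] hk.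
  by exists (fun _ => x0); split => // i.
have [s [sA ssep]] := IH (fun j jk => hk j (ltnW jk)).
case: (pselect (exists y, A y /\ forall i, (i < k)%N -> rho <= d (s i) y)) => [[y [Ay Hy]]|hno].
  exists (fun i => if i == k then y else s i); split.
    by move=> i ik; case: eqP => // /eqP ne; apply: sA; rewrite ltnS leq_eqVlt (negbTE ne) in ik.
  move=> i j ik jk ij.
  case: eqP => [ei|/eqP nei]; case: eqP => [ej|/eqP nej].
  - by exfalso; apply: ij; rewrite ei ej.
  - rewrite dsym; apply: Hy; rewrite ltnS leq_eqVlt (negbTE nej) in jk; exact: jk.
  - apply: Hy; rewrite ltnS leq_eqVlt (negbTE nei) in ik; exact: ik.
  - apply: ssep => //.
    + by rewrite ltnS leq_eqVlt (negbTE nei) in ik.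
    + by rewrite ltnS leq_eqVlt (negbTE nej) in jk.
exfalso; apply: (hk k (ltnSn k)); exists s; split; first by move=> i /sA /AE.
move=> y Ay; case: (pselect (exists2 i, (i < k)%N & d (s i) y < rho)) => [[i ik hi]|hn].
  by exists i => //; split => //; apply: AE.
exfalso; apply: hno; exists y; split => // i ik; rewrite leNgt; apply/negP => hlt.
by apply: hn; exists i.
Qed.

Lemma bridge T (d : T -> T -> R) E r A (b : R) : 0 <= b ->
  (forall j, CovN d E r A j -> b <= j%:R) ->
  exists k, b <= k%:R /\ forall j, (j < k)%N -> ~ CovN d E r A j.
Proof.
move=> b0 H.
have ex : exists k, `[< b <= k%:R >].
  by exists (Num.Def.archi_bound b); apply/asboolP; apply/ltW/archi_boundP.
case: (ex_minnP ex) => k /asboolP hk hmin; exists k; split => // j jk hj.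
have := hmin j (asboolT (H j hj)); rewrite leqNgt jk //.
Qed.

Lemma count_prod T1 T2 (d1 : T1 -> T1 -> R) (d2 : T2 -> T2 -> R) (A1 : set T1)
  (A2 : set T2) (A : set (T1 * T2)) rho k1 k2 N (s1 : nat -> T1) (s2 : nat -> T2) :
  is_metric d1 -> is_metric d2 ->
  (forall p, A1 p.1 -> A2 p.2 -> A p) ->
  (forall i, (i < k1)%N -> A1 (s1 i)) ->
  (forall i j, (i < k1)%N -> (j < k1)%N -> i <> j -> rho + rho <= d1 (s1 i) (s1 j)) ->
  (forall i, (i < k2)%N -> A2 (s2 i)) ->
  (forall i j, (i < k2)%N -> (j < k2)%N -> i <> j -> rho + rho <= d2 (s2 i) (s2 j)) ->
  CovN (dprod d1 d2) setT rho A N -> (k1 * k2 <= N)%N.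
Proof.
move=> [_ [_ [ds1 dt1]]] [_ [_ [ds2 dt2]]] hA sA1 sep1 sA2 sep2 [f [_ hf]].
have g_ex : forall p : 'I_k1 * 'I_k2,
    {m : 'I_N | dprod d1 d2 (f m) (s1 p.1, s2 p.2) < rho}.
  move=> p; apply: cid.
  have [i ilt [_ hi]] := hf _ (hA (s1 p.1, s2 p.2) (sA1 _ (ltn_ord _)) (sA2 _ (ltn_ord _))).
  by exists (Ordinal ilt).
have inj : injective (fun p => sval (g_ex p)).
  move=> [p1 p2] [q1 q2] /= e.
  have hp := svalP (g_ex (p1, p2)); have hq := svalP (g_ex (q1, q2)).
  rewrite e in hp; move: (sval (g_ex (q1, q2))) hp hq => m.
  rewrite /dprod /= !gt_max => /andP[hp1 hp2] /andP[hq1 hq2].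
  congr pair; apply: val_inj; apply: contrapT => ne.
  - have h2 := sep1 _ _ (ltn_ord p1) (ltn_ord q1) ne.
    have h1 := dt1 (s1 p1) (f m).1 (s1 q1); rewrite (ds1 (s1 p1) (f m).1) in h1.
    by have := le_trans h2 h1; rewrite leNgt (ltrD hp1 hq1).
  - have h2 := sep2 _ _ (ltn_ord p2) (ltn_ord q2) ne.
    have h1 := dt2 (s2 p2) (f m).2 (s2 q2); rewrite (ds2 (s2 p2) (f m).2) in h1.
    by have := le_trans h2 h1; rewrite leNgt (ltrD hp2 hq2).
by have := leq_card _ inj; rewrite card_prod !card_ord.
Qed.


Definition Nf T (d : T -> T -> R) (E : set T) (z : T) : R -> R -> \bar R :=
  fun lam r => covnum d E (lam * r) (cball d E z r).

Arguments Nf {T}.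
Arguments CovN_move {T d E1 E2 A x0 rho n}.
Arguments CovN_union {T d X1 X2 A1 A2 rho n1 n2}.
Arguments CovN_prod {T1 T2 d1 d2 A1 A2 A rho n1 n2}.
Arguments sep_exists {T d E A} x0 {rho} _ _ {k}.
Arguments bridge {T d E r A b}.
Arguments count_prod {T1 T2 d1 d2 A1 A2 A rho k1 k2 N s1 s2}.

Lemma lower_tdE T (d : T -> T -> R) E z : lower_td d E z = Lf (Nf d E z).
Proof. by []. Qed.
Lemma upper_tdE T (d : T -> T -> R) E z : upper_td d E z = Uf (Nf d E z).
Proof. by []. Qed.

Lemma metric_dzz T (d : T -> T -> R) z : is_metric d -> d z z = 0.
Proof. by move=> [_ [dxy _]]; apply/(dxy z z). Qed.

Lemma Nf_pos T (d : T -> T -> R) E z : d z z = 0 -> E z -> Npos (Nf d E z).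
Proof.
move=> dzz Ez lam r l0 r0; apply: (covnum_lb z) => n [f [_ hA]].
have [i ilt _] := hA z (conj Ez (ltac:(by rewrite dzz ltW) : d z z <= r)).
by rewrite lee_fin ler1n; apply: leq_ltn_trans ilt.
Qed.

Lemma Nf_mono T (d : T -> T -> R) (E1 E2 : set T) z mu r :
  is_metric d -> E1 `<=` E2 -> E1 z ->
  (Nf d E1 z (2 * mu)%R r <= Nf d E2 z mu r)%E.
Proof.
move=> md sE Ez; apply: (covnum_lb z) => n hn.
have hs : cball d E1 z r `<=` cball d E2 z r by move=> y [E1y dy]; split => //; apply: sE.
have := CovN_move md Ez (fun y (hy : cball d E1 z r y) => hy.1) (CovN_sub hs hn).
rewrite /Nf (_ : 2 * mu * r = mu * r + mu * r); last by ring.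
exact: covnum_le.
Qed.

Lemma Nf_ball T (d : T -> T -> R) (Y : set T) x R0 mu r :
  [set y | d x y < R0] `<=` Y -> r < R0 ->
  (Nf d setT x (1 * mu)%R r <= Nf d Y x mu r)%E.
Proof.
move=> sY rR; apply: (covnum_lb x) => n [f [hE hA]].
rewrite /Nf mul1r; apply: covnum_le; exists f; split => // y [_ dy].
have Yy : Y y by apply: sY; apply: le_lt_trans dy rR.
by have [i ilt [_ hi]] := hA y (conj Yy dy); exists i.
Qed.

Lemma Nf_union T (d : T -> T -> R) (X1 X2 : set T) x lam r b1 b2 :
  (Nf d X1 x lam r <= b1%:E)%E -> (Nf d X2 x lam r <= b2%:E)%E ->
  (Nf d (X1 `|` X2) x lam r <= (b1 + b2)%:E)%E.
Proof.
move=> h1 h2.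
have [n1 [hn1 hb1]] := covnum_att x h1.
have [n2 [hn2 hb2]] := covnum_att x h2.
have hs : cball d (X1 `|` X2) x r `<=` cball d X1 x r `|` cball d X2 x r.
  by move=> y [[X1y|X2y] dy]; [left|right].
apply: le_trans (covnum_le (CovN_sub hs (CovN_union hn1 hn2))) _.
by rewrite lee_fin natrD lerD.
Qed.

Lemma Nf_prodU T1 T2 (d1 : T1 -> T1 -> R) (d2 : T2 -> T2 -> R) x y lam r b1 b2 :
  (Nf d1 setT x lam r <= b1%:E)%E -> (Nf d2 setT y lam r <= b2%:E)%E ->
  (Nf (dprod d1 d2) setT (x, y) lam r <= (b1 * b2)%:E)%E.
Proof.
move=> h1 h2.
have [n1 [hn1 hb1]] := covnum_att x h1.
have [n2 [hn2 hb2]] := covnum_att y h2.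
have hA : forall p, cball (dprod d1 d2) setT (x, y) r p ->
    cball d1 setT x r p.1 /\ cball d2 setT y r p.2.
  by move=> p [_]; rewrite /dprod ge_max => /andP[p1 p2].
apply: le_trans (covnum_le (CovN_prod hA hn1 hn2)) _.
by rewrite lee_fin natrM ler_pM.
Qed.

Lemma Nf_prodL T1 T2 (d1 : T1 -> T1 -> R) (d2 : T2 -> T2 -> R) x y mu r b1 b2 :
  is_metric d1 -> is_metric d2 -> 0 <= b1 -> 0 <= b2 ->
  (b1%:E <= Nf d1 setT x (2 * mu)%R r)%E -> (b2%:E <= Nf d2 setT y (2 * mu)%R r)%E ->
  ((b1 * b2)%:E <= Nf (dprod d1 d2) setT (x, y) mu r)%E.
Proof.
move=> m1 m2 b10 b20 h1 h2; apply: (covnum_lb (x, y)) => N hN.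
have H1 : forall j, CovN d1 setT (2 * mu * r) (cball d1 setT x r) j -> b1 <= j%:R.
  by move=> j hj; rewrite -lee_fin; exact: le_trans h1 (covnum_le hj).
have H2 : forall j, CovN d2 setT (2 * mu * r) (cball d2 setT y r) j -> b2 <= j%:R.
  by move=> j hj; rewrite -lee_fin; exact: le_trans h2 (covnum_le hj).
have [k1 [hk1 hno1]] := bridge b10 H1.
have [k2 [hk2 hno2]] := bridge b20 H2.
have [s1 [sA1 sep1]] := sep_exists x m1 (fun _ _ => I) hno1.
have [s2 [sA2 sep2]] := sep_exists y m2 (fun _ _ => I) hno2.
have e : mu * r + mu * r = 2 * mu * r by ring.
have hA : forall p, cball d1 setT x r p.1 -> cball d2 setT y r p.2 ->
    cball (dprod d1 d2) setT (x, y) r p.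
  by move=> p [_ h1'] [_ h2']; split => //; rewrite /dprod ge_max h1' h2'.
have := count_prod (rho := mu * r) m1 m2 hA sA1 _ sA2 _ hN.
rewrite e => /(_ sep1 sep2) hk.
rewrite lee_fin; apply: le_trans (ler_pM b10 b20 hk1 hk2) _.
by rewrite -natrM ler_nat.
Qed.

End Comb.

Arguments Nf {R T}.
Arguments Nf_pos {R T d E z}. Arguments Nf_mono {R T d E1 E2 z mu r}.
Arguments Nf_ball {R T d Y x R0 mu r}. Arguments Nf_union {R T d X1 X2 x lam r b1 b2}.
Arguments Nf_prodU {R T1 T2 d1 d2 x y lam r b1 b2}.
Arguments Nf_prodL {R T1 T2 d1 d2 x y mu r b1 b2}.
Arguments metric_dzz {R T d} z.

Theorem proposition3p6 (R : realType) :
  (* (i) *)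
  (forall (T : Type) (d : T -> T -> R), is_metric d ->
   forall (Y : set T) (x : T), Y x ->
     (lower_td d Y x <= lower_td d setT x)%E /\
     (upper_td d Y x <= upper_td d setT x)%E /\
     ((exists R0 : R, 0 < R0 /\ [set y | d x y < R0] `<=` Y) ->
        lower_td d Y x = lower_td d setT x /\
        upper_td d Y x = upper_td d setT x)) /\
  (* (ii) *)
  (forall (T : Type) (d : T -> T -> R), is_metric d ->
   forall (X1 X2 : set T) (x : T), X1 x -> X2 x ->
     (maxe (lower_td d X1 x) (lower_td d X2 x) <= lower_td d (X1 `|` X2) x)%E /\
     upper_td d (X1 `|` X2) x = maxe (upper_td d X1 x) (upper_td d X2 x)) /\
  (* (iii) *)
  (forall (T1 T2 : Type) (d1 : T1 -> T1 -> R) (d2 : T2 -> T2 -> R),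
   is_metric d1 -> is_metric d2 ->
   forall (x : T1) (y : T2),
     (lower_td d1 setT x + lower_td d2 setT y
        <= lower_td (dprod d1 d2) setT (x, y))%E /\
     (upper_td (dprod d1 d2) setT (x, y)
        <= upper_td d1 setT x + upper_td d2 setT y)%E).
Proof.
have h12 : (1 <= 2 :> R) by lra.
split; [|split].
- move=> T d md Y x Yx.
  have hY := Nf_pos (metric_dzz x md) Yx.
  have hX := Nf_pos (E := setT) (metric_dzz x md) I.
  have HH : forall mu r, 0 < mu -> 2 * mu < 1 -> 0 < r < 1 ->
      (Nf d Y x (2 * mu)%R r <= Nf d setT x mu r)%E.
    by move=> mu r _ _ _; apply: Nf_mono md (fun _ _ => I) Yx.
  have le1 := mono_L (Nf d Y x) (Nf d setT x) 2 1 hY hX h12 ltr01 HH.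
  have le2 := mono_U (Nf d Y x) (Nf d setT x) 2 1 hY hX h12 ltr01 HH.
  change ((Lf (Nf d Y x) <= Lf (Nf d setT x))%E /\ (Uf (Nf d Y x) <= Uf (Nf d setT x))%E /\
     ((exists R0 : R, 0 < R0 /\ [set y | d x y < R0] `<=` Y) ->
        Lf (Nf d Y x) = Lf (Nf d setT x) /\ Uf (Nf d Y x) = Uf (Nf d setT x))).
  split; first exact: le1.
  split; first exact: le2.
  case=> R0 [R00 sY].
  have HH' : forall mu r, 0 < mu -> 1 * mu < 1 -> 0 < r < R0 ->
      (Nf d setT x (1 * mu)%R r <= Nf d Y x mu r)%E.
    by move=> mu r _ _ /andP[_ hr]; apply: Nf_ball sY hr.
  have ge1 := mono_L (Nf d setT x) (Nf d Y x) 1 R0 hX hY (lexx 1) R00 HH'.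
  have ge2 := mono_U (Nf d setT x) (Nf d Y x) 1 R0 hX hY (lexx 1) R00 HH'.
  split; apply: le_anti; apply/andP; split.
  exact: le1. exact: ge1. exact: le2. exact: ge2.
- move=> T d md X1 X2 x X1x X2x.
  have hU := Nf_pos (E := X1 `|` X2) (metric_dzz x md) (or_introl X1x).
  have h1 := Nf_pos (metric_dzz x md) X1x.
  have h2 := Nf_pos (metric_dzz x md) X2x.
  have HH1 : forall mu r, 0 < mu -> 2 * mu < 1 -> 0 < r < 1 ->
      (Nf d X1 x (2 * mu)%R r <= Nf d (X1 `|` X2) x mu r)%E.
    by move=> mu r _ _ _; apply: Nf_mono md (fun y h => or_introl h) X1x.
  have HH2 : forall mu r, 0 < mu -> 2 * mu < 1 -> 0 < r < 1 ->
      (Nf d X2 x (2 * mu)%R r <= Nf d (X1 `|` X2) x mu r)%E.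
    by move=> mu r _ _ _; apply: Nf_mono md (fun y h => or_intror h) X2x.
  have l1 := mono_L (Nf d X1 x) (Nf d (X1 `|` X2) x) 2 1 h1 hU h12 ltr01 HH1.
  have l2 := mono_L (Nf d X2 x) (Nf d (X1 `|` X2) x) 2 1 h2 hU h12 ltr01 HH2.
  have u1 := mono_U (Nf d X1 x) (Nf d (X1 `|` X2) x) 2 1 h1 hU h12 ltr01 HH1.
  have u2 := mono_U (Nf d X2 x) (Nf d (X1 `|` X2) x) 2 1 h2 hU h12 ltr01 HH2.
  have uU := union_U (Nf d (X1 `|` X2) x) (Nf d X1 x) (Nf d X2 x) hU h1 h2
    (fun lam r b1 b2 _ _ => @Nf_union _ _ d X1 X2 x lam r b1 b2).
  change ((maxe (Lf (Nf d X1 x)) (Lf (Nf d X2 x)) <= Lf (Nf d (X1 `|` X2) x))%E /\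
     Uf (Nf d (X1 `|` X2) x) = maxe (Uf (Nf d X1 x)) (Uf (Nf d X2 x))).
  split.
    rewrite ge_max; apply/andP; split; [exact: l1 | exact: l2].
  apply: le_anti; apply/andP; split; first exact: uU.
  rewrite ge_max; apply/andP; split; [exact: u1 | exact: u2].
- move=> T1 T2 d1 d2 m1 m2 x y.
  have dP : dprod d1 d2 (x, y) (x, y) = 0.
    by rewrite /dprod /= (metric_dzz x m1) (metric_dzz y m2) maxxx.
  have hP := Nf_pos (E := setT) dP I.
  have h1 := Nf_pos (E := setT) (metric_dzz x m1) I.
  have h2 := Nf_pos (E := setT) (metric_dzz y m2) I.
  have pL := prod_L (Nf (dprod d1 d2) setT (x, y)) (Nf d1 setT x) (Nf d2 setT y) hP h1 h2
    (fun mu r b1 b2 _ _ _ b10 b20 => Nf_prodL m1 m2 b10 b20).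
  have pU := prod_U (Nf (dprod d1 d2) setT (x, y)) (Nf d1 setT x) (Nf d2 setT y) hP h1 h2
    (fun lam r b1 b2 _ _ => @Nf_prodU _ _ _ d1 d2 x y lam r b1 b2).
  split; [exact: pL | exact: pU].
Qed.
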